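(* Given $\xi_2\in\mathbb{R}$, write $\xi_2=m+\theta$ with $m\in\mathbb{Z}$, $-\tfrac12\le\theta<\tfrac12$. Let $\eta>1$. Then there is a constant $C_\eta$ such that for all $f\in\mathcal S_\eta(\mathbb{R})$, all $y\ge\tfrac12$ and all $x,\phi\in\mathbb{R}$, $\xi_1\in\mathbb{R}$, $\zeta\in\mathbb{R}$, \[\Big|\Theta_f(x+iy,\phi;\xi,\zeta)-y^{1/4}e\Big(\zeta+\frac{(m-\theta)\xi_1+\theta^2x}{2}\Big)f_\phi(-\theta y^{1/2})\Big|\le C_\eta\,\kappa_\eta(f)\,y^{-(2\eta-1)/4}.\]
   Context: $e(x)=e^{2\pi ix}$, $\xi=(\xi_1,\xi_2)$. For $f:\mathbb{R}\to\mathbb{R}$ and $\phi\in\mathbb{R}$: $f_\phi=f$ if $\phi\equiv0\bmod2\pi$; $f_\phi(w)=e(-1/4)f(-w)$ if $\phi\equiv\pi\bmod2\pi$; otherwise $f_\phi(w)=e(-\sigma_\phi/8)|\sin\phi|^{-1/2}\int_\mathbb{R}e\big(\frac{\frac12(w^2+w'^2)\cos\phi-ww'}{\sin\phi}\big)f(w')dw'$ with $\sigma_\phi=2\nu+1$ for $\nu\pi<\phi<(\nu+1)\pi$, $\nu\in\mathbb{Z}$. $\kappa_\eta(f)=\sup_{w,\phi}|f_\phi(w)|(1+|w|)^\eta$ and $\mathcal S_\eta(\mathbb{R})=\{f:\mathbb{R}\to\mathbb{R}:\kappa_\eta(f)<\infty\}$. For $f\in\mathcal S_\eta$, $\eta>1$: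 $\Theta_f(x+iy,\phi;\xi,\zeta)=y^{1/4}e(\zeta-\tfrac12\xi_1\xi_2)\sum_{n\in\mathbb{Z}}f_\phi((n-\xi_2)y^{1/2})e(\tfrac12(n-\xi_2)^2x+n\xi_1)$. *)

(* Defs.v *)
From HB Require Import structures.
From mathcomp Require Import all_boot all_order all_algebra.
From mathcomp Require Import all_classical all_reals all_analysis.
From mathcomp Require Import complex.
Set Implicit Arguments. Unset Strict Implicit. Unset Printing Implicit Defensive.
Import Order.TTheory GRing.Theory Num.Theory.
Import numFieldNormedType.Exports.
Local Open Scope classical_set_scope.
Local Open Scope ring_scope.
Local Open Scope complex_scope.

Section Defs.
Variable R : realType.

Definition ee (x : R) : R[i] := (cos (2 * pi * x)) +i* (sin (2 * pi * x)).

Definition cRe (z : R[i]) : R := let: a +i* _ := z in a.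
Definition cIm (z : R[i]) : R := let: _ +i* b := z in b.
Definition cabs (z : R[i]) : R := Num.sqrt (cRe z ^+ 2 + cIm z ^+ 2).

Definition cintegral (g : R -> R[i]) : R[i] :=
  (Rintegral lebesgue_measure setT (fun t => cRe (g t)))
  +i* (Rintegral lebesgue_measure setT (fun t => cIm (g t))).

Definition sigma_phi (phi : R) : R := 2 * (Num.floor (phi / pi))%:~R + 1.

Definition frot (f : R -> R) (phi : R) (w : R) : R[i] :=
  if (phi / (2 * pi)) \is a Num.int then (f w)%:C
  else if ((phi - pi) / (2 * pi)) \is a Num.int then ee (- (1/4)) * (f (- w))%:C
  else ee (- (sigma_phi phi / 8)) * ((Num.sqrt `|sin phi|)^-1)%:C *
       cintegral (fun w' =>
         ee (((1/2) * (w ^+ 2 + w' ^+ 2) * cos phi - w * w') / sin phi)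
         * (f w')%:C).

Definition kappa (eta : R) (f : R -> R) : R :=
  sup [set r | exists w phi, r = cabs (frot f phi w) * (1 + `|w|) `^ eta].

Definition in_S (eta : R) (f : R -> R) : Prop :=
  exists M : R, forall w phi, cabs (frot f phi w) * (1 + `|w|) `^ eta <= M.

Definition psum (a : int -> R[i]) (N : nat) : R[i] :=
  \sum_(k < (2 * N).+1) a ((k : nat)%:Z - N%:Z)%R.

Definition zseries (a : int -> R[i]) : R[i] :=
  (lim ((fun N => cRe (psum a N)) @ \oo))
  +i* (lim ((fun N => cIm (psum a N)) @ \oo)).

Definition Theta (f : R -> R) (x y phi xi1 xi2 zeta : R) : R[i] :=
  (y `^ (1/4))%:C * ee (zeta - (1/2) * xi1 * xi2) *
  zseries (fun n => frot f phi ((n%:~R - xi2) * Num.sqrt y)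
                    * ee ((1/2) * (n%:~R - xi2) ^+ 2 * x + n%:~R * xi1)).

End Defs.

(* Main.v *)
Require Import Defs.
From HB Require Import structures.
From mathcomp Require Import all_boot all_order all_algebra.
From mathcomp Require Import all_classical all_reals all_analysis.
From mathcomp Require Import complex.
From mathcomp Require Import ring lra zify.
Import Order.TTheory GRing.Theory Num.Theory.
Local Open Scope classical_set_scope.
Local Open Scope ring_scope.

Section Core.
Variable R : realType.

Lemma powR_pos (t s : R) : 0 < t -> t `^ s = expR (s * ln t).
Proof. by move=> ht; rewrite /powR gt_eqF. Qed.

Lemma ln_step (t : R) : 0 < t -> 1 / (t + 1) <= ln (t + 1) - ln t.
Proof.
move=> ht; have ht1 : 0 < t + 1 by lra.
have := expR_ge1Dx (ln t - ln (t + 1)).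
rewrite expRB !lnK ?posrE // => h.
have e : t / (t + 1) = 1 - 1 / (t + 1) by field; lra.
rewrite e in h; lra.
Qed.

Lemma core1 (s t : R) : 0 < s -> 0 < t ->
  s / (t + 1) / (t + 1) `^ s <= (t `^ s)^-1 - ((t + 1) `^ s)^-1.
Proof.
move=> hs ht; have ht1 : 0 < t + 1 by lra.
rewrite !powR_pos //.
set A := expR (s * ln t); set d := s * (ln (t + 1) - ln t).
have eB : expR (s * ln (t + 1)) = A * expR d.
  by rewrite -expRD; congr expR; rewrite /d; ring.
rewrite eB.
have hA : 0 < A by apply: expR_gt0.
have hd : s / (t + 1) <= d.
  have := ln_step t ht; rewrite div1r => h.
  by rewrite /d; apply: ler_wpM2l; lra.
have hE : 0 < expR d by apply: expR_gt0.
have he := expR_ge1Dx d.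
rewrite -subr_ge0.
have -> : A^-1 - (A * expR d)^-1 - s / (t + 1) / (A * expR d) =
   (expR d - 1 - s / (t + 1)) / (A * expR d).
  by field; apply/and3P; split; rewrite gt_eqF.
apply: divr_ge0; first lra.
by apply: mulr_ge0; lra.
Qed.

Lemma core2 (eta t : R) : 1 < eta -> 1 <= t ->
  (t `^ eta)^-1 <= 2 `^ eta / (eta - 1) *
     ((t `^ (eta - 1))^-1 - ((t + 1) `^ (eta - 1))^-1).
Proof.
move=> he ht.
have h := core1 (eta - 1) t ltac:(lra) ltac:(lra).
set D := (_^-1 - _^-1) in h *.
have eX : (t + 1) `^ eta = (t + 1) `^ (eta - 1) * (t + 1).
  rewrite -{3}(@powRr1 _ (t + 1)); last lra.
  by rewrite -powRD ?subrK //; apply/implyP => _; rewrite gt_eqF //; lra.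
set X := (t + 1) `^ eta; set Y := t `^ eta; set P := 2 `^ eta.
have hX : 0 < X by apply: powR_gt0; lra.
have hY : 0 < Y by apply: powR_gt0; lra.
have hP : 0 < P by apply: powR_gt0; lra.
have hXY : X <= P * Y.
  rewrite /P /Y -powRM; [|lra|lra].
  by apply: ge0_ler_powR; rewrite ?nnegrE; lra.
have hD : (eta - 1) / X <= D.
  apply: le_trans _ h; rewrite /X eX.
  have hZ : 0 < (t + 1) `^ (eta - 1) by apply: powR_gt0; lra.
  by rewrite le_eqVlt; apply/orP; left; apply/eqP; field; apply/andP; split;
    rewrite gt_eqF //; lra.
have h1 : Y^-1 <= P / X.
  rewrite -subr_ge0.
  have -> : P / X - Y^-1 = (P * Y - X) / (X * Y).
    by field; apply/andP; split; rewrite gt_eqF.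
  by apply: divr_ge0; [lra | apply: mulr_ge0; lra].
apply: le_trans h1 _.
rewrite -subr_ge0.
have -> : P / (eta - 1) * D - P / X = P / (eta - 1) * (D - (eta - 1) / X).
  by field; apply/andP; split; rewrite gt_eqF //; lra.
apply: mulr_ge0; last lra.
by apply: divr_ge0; lra.
Qed.

Lemma powR_inv_bnd (a s : R) : 1 <= a -> 0 <= s -> 0 < (a `^ s)^-1 <= 1.
Proof.
move=> ha hs; have h1 : 1 <= a `^ s.
  by rewrite -(powRr0 a); apply: ler_powR.
apply/andP; split; first by rewrite invr_gt0; lra.
by rewrite invr_le1 // ?unitfE; lra.
Qed.

Variable eta : R.
Hypothesis heta : 1 < eta.

Definition KK : R := 2 `^ eta / (eta - 1).
Definition Psi (j : int) : R :=
  if (j <= 0)%R then KK * ((1 - j%:~R) `^ (eta - 1))^-1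
  else 2 * KK - KK * ((j%:~R : R) `^ (eta - 1))^-1.
Definition Hf (j : int) : R :=
  if j == 0 then 0 else (`|(j%:~R : R)| `^ eta)^-1.

Lemma KK_gt0 : 0 < KK.
Proof. by apply: divr_gt0; [apply: powR_gt0 | rewrite subr_gt0]. Qed.

Lemma Hf_ge0 j : 0 <= Hf j.
Proof. by rewrite /Hf; case: ifP => // _; rewrite invr_ge0 powR_ge0. Qed.

Lemma Psi_bnd j : 0 <= Psi j <= 2 * KK.
Proof.
have hK := KK_gt0.
rewrite /Psi; case: ifP => hj.
  have /andP[h1 h2] : 0 < ((1 - j%:~R) `^ (eta - 1))^-1 <= 1.
    apply: powR_inv_bnd; last by rewrite subr_ge0 ltW.
    have : (j%:~R : R) <= 0 by rewrite lerz0.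
    lra.
  by apply/andP; split; nra.
have /andP[h1 h2] : 0 < ((j%:~R : R) `^ (eta - 1))^-1 <= 1.
  apply: powR_inv_bnd; last by rewrite subr_ge0 ltW.
  have : 0 < j by rewrite ltNge hj.
  by rewrite ler1z -gtz0_ge1.
by apply/andP; split; nra.
Qed.

Lemma Hf_Psi j : Hf j <= Psi (j + 1) - Psi j.
Proof.
have hK := KK_gt0.
rewrite /Hf /Psi; case: (ltrgtP j 0) => hj.
- have h1 : (j + 1 <= 0)%R by rewrite lezD1.
  rewrite h1 intrD.
  have hr : (j%:~R : R) <= -1.
    have : ((j + 1)%:~R : R) <= 0 by rewrite lerz0.
    rewrite intrD /=; lra.
  rewrite ltr0_norm; last lra.
  have := core2 eta (- j%:~R) heta ltac:(lra).
  rewrite /KK.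
  have -> : 1 - (j%:~R + 1%:~R) = - (j%:~R : R) by rewrite /=; ring.
  have -> : 1 - (j%:~R : R) = - j%:~R + 1 by ring.
  by rewrite mulrBr.
- rewrite lezD1 (lt_gtF hj).
  have hr : 1 <= (j%:~R : R) by rewrite ler1z -gtz0_ge1.
  rewrite gtr0_norm; last lra.
  have := core2 eta (j%:~R) heta hr.
  rewrite /KK intrD /=.
  move=> h; apply: le_trans h _; rewrite le_eqVlt; apply/orP; left; apply/eqP.
  ring.
- subst j; rewrite add0r /= subr0 powR1 invr1 mulr1; lra.
Qed.

Lemma Hf_sum (c : int) (L : nat) :
  \sum_(k < L) Hf (k%:Z + c) <= 2 * KK.
Proof.
suff h : \sum_(k < L) Hf (k%:Z + c) <= Psi (L%:Z + c) - Psi c.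
  apply: le_trans h _.
  have /andP[h1 h2] := Psi_bnd (L%:Z + c); have /andP[h3 h4] := Psi_bnd c.
  lra.
elim: L => [|L IH]; first by rewrite big_ord0 add0r subrr.
rewrite big_ord_recr /=.
have := Hf_Psi (L%:Z + c).
have -> : (L%:Z + c + 1 = L.+1%:Z + c)%R by rewrite intS; ring.
lra.
Qed.
End Core.
Arguments KK {R}. Arguments Hf {R}. Arguments Psi {R}.

Section Win.
Variable R : realType.

Definition ws (N : nat) : seq int :=
  [seq (k%:Z - N%:Z)%R | k <- index_iota 0 (2 * N).+1].

Lemma ws_uniq N : uniq (ws N).
Proof.
rewrite map_inj_uniq ?iota_uniq //; by move=> a b /addIr [].
Qed.

Lemma ws_mem (m : int) N : (absz m <= N)%N -> m \in ws N.
Proof.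
move=> h; apply/mapP; exists (absz (m + N%:Z)).
  rewrite mem_index_iota; lia.
lia.
Qed.

Lemma ws_sum (V : zmodType) (F : int -> V) N :
  \sum_(n <- ws N) F n = \sum_(k < (2 * N).+1) F (k%:Z - N%:Z).
Proof. by rewrite big_map big_mkord. Qed.

Lemma ws_rec (V : zmodType) (F : int -> V) N :
  \sum_(n <- ws N.+1) F n =
  F (- (N.+1)%:Z) + \sum_(n <- ws N) F n + F (N.+1)%:Z.
Proof.
rewrite !ws_sum.
have -> : (2 * N.+1).+1 = ((2 * N).+1).+2 by lia.
rewrite big_ord_recl big_ord_recr /= addrA.
congr (_ + _ + _).
- by congr F; rewrite add0r.
- by apply: eq_bigr => i _; congr F; rewrite /bump leq0n add1n; lia.
- by congr F; rewrite /bump leq0n add1n; lia.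
Qed.


Lemma win1 (F G : int -> R) (m : int) (s : seq int) :
  uniq s -> m \in s -> (forall n, n != m -> `|F n| <= G n) ->
  (forall n, 0 <= G n) ->
  `|\sum_(n <- s) F n - F m| <= \sum_(n <- s) G n.
Proof.
move=> us ms hFG hG.
rewrite (bigD1_seq m) //= [F m + _]addrC addrK.
apply: le_trans (ler_norm_sum _ _ _) _.
rewrite [X in _ <= X](bigD1_seq m) //=.
apply: le_trans (_ : _ <= \sum_(n <- s | n != m) G n) _.
  by apply: ler_sum => n /hFG.
by apply: ler_wpDl.
Qed.

Lemma win2 (F G : int -> R) (m : int) (s : seq int) (B : R) :
  uniq s -> (forall n, 0 <= F n) -> (forall n, n != m -> F n <= G n) ->
  F m <= B -> (forall n, 0 <= G n) ->
  \sum_(n <- s) F n <= B + \sum_(n <- s) G n.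
Proof.
move=> us hF hFG hB hG.
case: (boolP (m \in s)) => ms.
  rewrite (bigD1_seq m) //= [X in _ <= _ + X](bigD1_seq m) //=.
  apply: lerD => //.
  apply: le_trans (_ : _ <= \sum_(n <- s | n != m) G n) _.
    by apply: ler_sum => n /hFG.
  by apply: ler_wpDl.
apply: le_trans (_ : _ <= \sum_(n <- s) G n) _.
  rewrite big_seq_cond [X in _ <= X]big_seq_cond; apply: ler_sum => n.
  rewrite andbT => ns; apply: hFG; apply: contraNneq ms => <-; exact: ns.
apply: ler_wpDl => //; exact: le_trans (hF m) hB.
Qed.

Lemma win_mono (F : int -> R) : (forall n, 0 <= F n) ->
  {homo (fun N => \sum_(n <- ws N) F n) : a b / (a <= b)%N >-> a <= b}.
Proof.
move=> hF; apply/nondecreasing_seqP => N /=.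
rewrite ws_rec; have := hF (- (N.+1)%:Z); have := hF (N.+1)%:Z; lra.
Qed.

Lemma cvg_win (F A : int -> R) (B : R) :
  (forall n, `|F n| <= A n) -> (forall N, \sum_(n <- ws N) A n <= B) ->
  cvgn (fun N => \sum_(n <- ws N) F n).
Proof.
move=> hFA hB.
have hA : forall n, 0 <= A n by move=> n; exact: le_trans (normr_ge0 _) (hFA n).
have hAF : forall n, 0 <= A n + F n.
  by move=> n; have := hFA n; rewrite ler_norml; lra.
have cQ : cvgn (fun N => \sum_(n <- ws N) A n).
  apply: nondecreasing_is_cvgn; first exact: win_mono.
  by exists B => _ [N _ <-].
have cP : cvgn (fun N => \sum_(n <- ws N) (A n + F n)).
  apply: nondecreasing_is_cvgn; first exact: win_mono.
  exists (B + B) => _ [N _ <-].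
  rewrite big_split /=; apply: lerD => //.
  apply: le_trans (hB N); apply: ler_sum => n _.
  by have := hFA n; rewrite ler_norml; lra.
suff -> : (fun N => \sum_(n <- ws N) F n) =
  (fun N => (\sum_(n <- ws N) (A n + F n)) - \sum_(n <- ws N) A n).
  exact: is_cvgB cP cQ.
apply: funext => N /=.
by rewrite big_split /= addrAC subrr add0r.
Qed.

End Win.

Local Open Scope complex_scope.

Section Helpers.
Variable R : realType.

Lemma cRe_add (x y : R[i]) : cRe (x + y) = cRe x + cRe y.
Proof. by case: x => ? ?; case: y. Qed.
Lemma cIm_add (x y : R[i]) : cIm (x + y) = cIm x + cIm y.
Proof. by case: x => ? ?; case: y. Qed.
Lemma cRe_opp (x : R[i]) : cRe (- x) = - cRe x.
Proof. by case: x. Qed.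
Lemma cIm_opp (x : R[i]) : cIm (- x) = - cIm x.
Proof. by case: x. Qed.

Lemma cRe_sum (I : Type) (r : seq I) (P : pred I) (F : I -> R[i]) :
  cRe (\sum_(i <- r | P i) F i) = \sum_(i <- r | P i) cRe (F i).
Proof. exact: (big_morph _ (@cRe_add) (erefl _)). Qed.
Lemma cIm_sum (I : Type) (r : seq I) (P : pred I) (F : I -> R[i]) :
  cIm (\sum_(i <- r | P i) F i) = \sum_(i <- r | P i) cIm (F i).
Proof. exact: (big_morph _ (@cIm_add) (erefl _)). Qed.

Lemma cabs_mul (x y : R[i]) : cabs (x * y) = cabs x * cabs y.
Proof.
case: x => a b; case: y => c d; rewrite /cabs /= -sqrtrM; last first.
  by rewrite addr_ge0 // sqr_ge0.
by congr Num.sqrt; ring.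
Qed.

Lemma cabs_ee (x : R) : cabs (ee x) = 1.
Proof. by rewrite /cabs /ee /= cos2Dsin2 sqrtr1. Qed.

Lemma cabs_realC (x : R) : cabs (x%:C) = `|x|.
Proof. by rewrite /cabs /= expr0n /= addr0 sqrtr_sqr. Qed.

Lemma cabs_ge0 (x : R[i]) : 0 <= cabs x.
Proof. exact: sqrtr_ge0. Qed.

Lemma cRe_le (x : R[i]) : `|cRe x| <= cabs x.
Proof.
case: x => a b; rewrite /cabs /= -sqrtr_sqr ler_wsqrtr //.
by rewrite lerDl sqr_ge0.
Qed.
Lemma cIm_le (x : R[i]) : `|cIm x| <= cabs x.
Proof.
case: x => a b; rewrite /cabs /= -sqrtr_sqr ler_wsqrtr //.
by rewrite lerDr sqr_ge0.
Qed.

Lemma cabs_le (x : R[i]) : cabs x <= `|cRe x| + `|cIm x|.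
Proof.
case: x => a b; rewrite /cabs /=.
rewrite -[X in _ <= X]ger0_norm ?addr_ge0 // -sqrtr_sqr ler_wsqrtr //.
rewrite sqrrD !real_normK ?num_real.
  by have := normr_ge0 a; have := normr_ge0 b; nra.
all: by [].
Qed.

Lemma ee_add (a b : R) : ee (a + b) = ee a * ee b.
Proof.
rewrite /ee /= !mulrDr cosD sinD; congr (_ +i* _); ring.
Qed.

End Helpers.

Theorem lemma2p1 (R : realType) (eta : R) (heta : 1 < eta) :
  exists C : R, forall (f : R -> R),
    measurable_fun [set: R] f -> in_S eta f ->
    forall (y x phi xi1 xi2 zeta : R), 1/2 <= y ->
    let m : int := Num.floor (xi2 + 1/2) in
    let theta : R := xi2 - m%:~R in
    cabs (Theta f x y phi xi1 xi2 zeta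
          - (y `^ (1/4))%:C
            * ee (zeta + ((m%:~R - theta) * xi1 + theta ^+ 2 * x) / 2)
            * frot f phi (- theta * Num.sqrt y))
    <= C * kappa eta f * y `^ (- (2 * eta - 1) / 4).
Proof.
exists (4 * KK eta * 2 `^ eta).
move=> f _ [M hM] y x phi xi1 xi2 zeta hy.
cbv zeta.
set m := Num.floor (xi2 + 1/2).
set theta := xi2 - m%:~R.
have y0 : 0 < y by lra.
have hsup : has_sup [set r | exists w phi,
    r = cabs (frot f phi w) * (1 + `|w|) `^ eta].
  split; first by exists (cabs (frot f 0 0) * (1 + `|0:R|) `^ eta), 0, 0.
  by exists M => _ [w [p ->]].
have hk : forall w p, cabs (frot f p w) * (1 + `|w|) `^ eta <= kappa eta f.
  by move=> w p; apply: (sup_upper_bound hsup); exists w, p.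
have k0 : 0 <= kappa eta f.
  apply: le_trans (hk 0 0); apply: mulr_ge0; [exact: cabs_ge0 | exact: powR_ge0].
have hZ : forall w : R, 0 < (1 + `|w|) `^ eta.
  by move=> w; apply: powR_gt0; have := normr_ge0 w; lra.
have hfr : forall w p, cabs (frot f p w) <= kappa eta f / (1 + `|w|) `^ eta.
  by move=> w p; rewrite ler_pdivlMr //; exact: hk.
have hm1 : (m%:~R : R) <= xi2 + 1/2 by exact: floor_le.
have hm2 : xi2 + 1/2 < (m + 1)%:~R by exact: floorD1_gt.
rewrite intrD /= in hm2.
have hth : `|theta| <= 1/2 by rewrite /theta ler_norml; lra.
pose a := fun n : int => frot f phi ((n%:~R - xi2) * Num.sqrt y) *
   ee ((1/2) * (n%:~R - xi2) ^+ 2 * x + n%:~R * xi1).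
have hsy : 0 <= Num.sqrt y := sqrtr_ge0 y.
have hY : 0 < y `^ (2^-1 * eta) := powR_gt0 _ y0.
have hP : 0 < 2 `^ eta by apply: powR_gt0; lra.
pose c0 := kappa eta f * 2 `^ eta / y `^ (2^-1 * eta).
have c00 : 0 <= c0.
  by apply: divr_ge0; [apply: mulr_ge0 => //; exact: powR_ge0 | exact: powR_ge0].
have hterm : forall n, n != m -> cabs (a n) <= c0 * Hf eta (n - m).
  move=> n hn; rewrite /a cabs_mul cabs_ee mulr1.
  set w := (n%:~R - xi2) * Num.sqrt y.
  have hrj : 1 <= `|((n - m)%:~R : R)|.
    by rewrite -intr_norm ler1z -gtz0_ge1 normr_gt0 subr_eq0.
  set rj := ((n - m)%:~R : R) in hrj *.
  have ern : n%:~R - xi2 = rj - theta by rewrite /rj /theta intrB; ring.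
  have hnx : `|rj| <= 2 * `|n%:~R - xi2|.
    rewrite ern; have t := ler_normD (rj - theta) theta.
    rewrite subrK in t; lra.
  have hnw : `|rj| * Num.sqrt y <= 2 * (1 + `|w|).
    rewrite /w normrM (ger0_norm hsy).
    have := normr_ge0 (n%:~R - xi2); nra.
  have hpow : `|rj| `^ eta * y `^ (2^-1 * eta) <= 2 `^ eta * (1 + `|w|) `^ eta.
    rewrite powRrM powR12_sqrt; last lra.
    rewrite -(powRM eta (normr_ge0 rj) hsy).
    rewrite -(powRM eta (_ : 0 <= 2) (_ : 0 <= 1 + `|w|)); last 2 first.
    - lra.
    - by have := normr_ge0 w; lra.
    apply: ge0_ler_powR => //; first lra.
    + by rewrite nnegrE; apply: mulr_ge0.
    + by rewrite nnegrE; have := normr_ge0 w; nra.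
  rewrite /Hf ifN; last by rewrite subr_eq0.
  apply: le_trans (hfr w phi) _.
  have hQ : 0 < `|rj| `^ eta by apply: powR_gt0; lra.
  have hZw := hZ w.
  rewrite -subr_ge0.
  have -> : c0 * (`|rj| `^ eta)^-1 - kappa eta f / (1 + `|w|) `^ eta =
     kappa eta f * (2 `^ eta * (1 + `|w|) `^ eta - `|rj| `^ eta * y `^ (2^-1 * eta))
      / (`|rj| `^ eta * y `^ (2^-1 * eta) * (1 + `|w|) `^ eta).
    by rewrite /c0; field; apply/and3P; split; rewrite gt_eqF.
  apply: divr_ge0; first by apply: mulr_ge0 => //; lra.
  by apply: mulr_ge0; [apply: mulr_ge0|]; lra.
have hmterm : cabs (a m) <= kappa eta f.
  rewrite /a cabs_mul cabs_ee mulr1; apply: le_trans (hfr _ phi) _.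
  have /andP[h1 h2] := @powR_inv_bnd R (1 + `|(m%:~R - xi2) * Num.sqrt y|) eta
     ltac:(have := normr_ge0 ((m%:~R - xi2) * Num.sqrt y); lra) ltac:(lra).
  rewrite -[X in _ <= X]mulr1; exact: ler_wpM2l.
pose G := fun n : int => c0 * Hf eta (n - m).
have hG : forall n, 0 <= G n by move=> n; apply: mulr_ge0 => //; exact: Hf_ge0.
pose T := c0 * (2 * KK eta).
have Gsum : forall N, \sum_(n <- ws N) G n <= T.
  move=> N; rewrite ws_sum -mulr_sumr; apply: ler_wpM2l => //.
  rewrite (eq_bigr (fun k : 'I_((2 * N).+1) => Hf eta (k%:Z + (- N%:Z - m)))).
    exact: (@Hf_sum R eta heta).
  by move=> k _; congr Hf; ring.
have Asum : forall N, \sum_(n <- ws N) cabs (a n) <= kappa eta f + T.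
  move=> N; apply: le_trans (_ : _ <= kappa eta f + \sum_(n <- ws N) G n) _.
    apply: (@win2 R _ _ m) => //; [exact: ws_uniq | move=> n; exact: cabs_ge0].
  by apply: lerD.
have eRe : (fun N => cRe (psum a N)) = (fun N => \sum_(n <- ws N) cRe (a n)).
  by apply: funext => N; rewrite /psum -ws_sum cRe_sum.
have eIm : (fun N => cIm (psum a N)) = (fun N => \sum_(n <- ws N) cIm (a n)).
  by apply: funext => N; rewrite /psum -ws_sum cIm_sum.
have cvRe : cvgn (fun N => \sum_(n <- ws N) cRe (a n)).
  by apply: (@cvg_win R _ (fun n => cabs (a n))) Asum => n; exact: cRe_le.
have cvIm : cvgn (fun N => \sum_(n <- ws N) cIm (a n)).
  by apply: (@cvg_win R _ (fun n => cabs (a n))) Asum => n; exact: cIm_le.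
have evRe : forall N, (absz m <= N)%N ->
    `|\sum_(n <- ws N) cRe (a n) - cRe (a m)| <= T.
  move=> N hN; apply: le_trans _ (Gsum N).
  apply: win1 => //; [exact: ws_uniq | exact: ws_mem |].
  move=> n hn; rewrite /G; apply: le_trans (hterm n hn); exact: cRe_le.
have evIm : forall N, (absz m <= N)%N ->
    `|\sum_(n <- ws N) cIm (a n) - cIm (a m)| <= T.
  move=> N hN; apply: le_trans _ (Gsum N).
  apply: win1 => //; [exact: ws_uniq | exact: ws_mem |].
  move=> n hn; rewrite /G; apply: le_trans (hterm n hn); exact: cIm_le.
have lRe : `|lim ((fun N => \sum_(n <- ws N) cRe (a n)) @ \oo) - cRe (a m)| <= T.
  rewrite ler_norml; apply/andP; split.
    suff : cRe (a m) - T <= lim ((fun N => \sum_(n <- ws N) cRe (a n)) @ \oo) by lra.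
    apply: limr_ge => //; exists (absz m) => // N /= hN.
    by have := evRe N hN; rewrite ler_norml; lra.
  suff : lim ((fun N => \sum_(n <- ws N) cRe (a n)) @ \oo) <= cRe (a m) + T by lra.
  apply: limr_le => //; exists (absz m) => // N /= hN.
  by have := evRe N hN; rewrite ler_norml; lra.
have lIm : `|lim ((fun N => \sum_(n <- ws N) cIm (a n)) @ \oo) - cIm (a m)| <= T.
  rewrite ler_norml; apply/andP; split.
    suff : cIm (a m) - T <= lim ((fun N => \sum_(n <- ws N) cIm (a n)) @ \oo) by lra.
    apply: limr_ge => //; exists (absz m) => // N /= hN.
    by have := evIm N hN; rewrite ler_norml; lra.
  suff : lim ((fun N => \sum_(n <- ws N) cIm (a n)) @ \oo) <= cIm (a m) + T by lra.
  apply: limr_le => //; exists (absz m) => // N /= hN.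
  by have := evIm N hN; rewrite ler_norml; lra.
have eT : Theta f x y phi xi1 xi2 zeta =
    (y `^ (1/4))%:C * ee (zeta - (1/2) * xi1 * xi2) * zseries a by [].
have emain : (y `^ (1/4))%:C
    * ee (zeta + ((m%:~R - theta) * xi1 + theta ^+ 2 * x) / 2)
    * frot f phi (- theta * Num.sqrt y) =
    (y `^ (1/4))%:C * ee (zeta - (1/2) * xi1 * xi2) * a m.
  rewrite /a.
  have -> : ee (zeta + ((m%:~R - theta) * xi1 + theta ^+ 2 * x) / 2) =
     ee (zeta - (1/2) * xi1 * xi2) *
     ee ((1/2) * (m%:~R - xi2) ^+ 2 * x + m%:~R * xi1).
    by rewrite -ee_add; congr ee; rewrite /theta; field.
  have -> : - theta * Num.sqrt y = (m%:~R - xi2) * Num.sqrt y.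
    by rewrite /theta; ring.
  by rewrite !mulrA mulrAC.
rewrite eT emain -mulrBr !cabs_mul cabs_realC cabs_ee mulr1.
rewrite ger0_norm; last exact: powR_ge0.
have hcab : cabs (zseries a - a m) <= T + T.
  apply: le_trans (@cabs_le R (zseries a - a m)) _.
  rewrite /zseries eRe eIm !cRe_add !cIm_add cRe_opp cIm_opp /=.
  exact: lerD.
have ey : y `^ (- (2 * eta - 1) / 4) = y `^ (1/4) * (y `^ (2^-1 * eta))^-1.
  rewrite -powRN -powRD; last by apply/implyP => _; rewrite gt_eqF.
  by congr powR; field.
rewrite ey.
have -> : 4 * KK eta * 2 `^ eta * kappa eta f * (y `^ (1 / 4) * (y `^ (2^-1 * eta))^-1)
   = y `^ (1/4) * (T + T) by rewrite /T /c0; ring.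
apply: ler_wpM2l => //; exact: powR_ge0.
Qed.
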